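(* Let $k\ge 2$ be an integer and $D$ a strongly connected digraph with no directed cycle of length congruent to $1$ modulo $k$. Let $T$ be a DFS tree of $D$ rooted at $r$, of length $t$, with levels $V_0,\ldots,V_t$. For $s\in\{0,1,\ldots,k-1\}$ let $U_s=\bigcup_{0\le i\le t,\ i\equiv s \pmod k} V_i$. Then $U_0,\ldots,U_{k-1}$ form a partition of $V(D)$ into acyclic sets.
   Context: Digraphs are finite and loopless; paths and cycles are directed; $l(\cdot)$ denotes length. A DFS tree $T$ of a strongly connected digraph $D$ rooted at $r$ is the spanning out-branching produced by a depth-first search started at $r$. $P_u$ is the unique $ru$-path in $T$; the length $t$ of $T$ is the length of a longest path in $T$; the levels are $V_i=\{u: l(P_u)=i\}$, $0\le i\le t$. A set of vertices is acyclic if it induces no directed cycle. *)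

(* Defs.v *)
From mathcomp Require Import all_boot.
Set Implicit Arguments. Unset Strict Implicit. Unset Printing Implicit Defensive.

(* A digraph on a finite vertex type V is an arc relation D : rel V
   (loopless = irreflexive D). *)

(* A directed cycle: a nonempty duplicate-free sequence c of vertices with
   arcs c_0 -> c_1 -> ... -> c_{m-1} -> c_0; its length is size c. *)
Definition dicycle (V : finType) (D : rel V) (c : seq V) : bool :=
  [&& c != [::], uniq c & cycle D c].

Definition strongly_connected (V : finType) (D : rel V) : Prop :=
  forall u v : V, connect D u v.

Definition acyclic_set (V : finType) (D : rel V) (A : V -> Prop) : Prop :=
  forall c : seq V, dicycle D c -> ~ (forall x, x \in c -> A x).

(* Depth-first search, with arbitrary choice of the next unvisited
   out-neighbour.  State: list of visited vertices, the DFS stack (top first),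
   and the list of tree arcs created so far. *)
Inductive dfs_state (V : finType) (D : rel V) (r : V) :
    seq V -> seq V -> seq (V * V) -> Prop :=
| dfs_init : dfs_state D r [:: r] [:: r] [::]
| dfs_advance vis st arcs u v :
    dfs_state D r vis (u :: st) arcs -> D u v -> v \notin vis ->
    dfs_state D r (v :: vis) (v :: u :: st) ((u, v) :: arcs)
| dfs_retreat vis st arcs u :
    dfs_state D r vis (u :: st) arcs -> (forall v, D u v -> v \in vis) ->
    dfs_state D r vis st arcs.

Definition dfs_tree (V : finType) (D : rel V) (r : V) (T : rel V) : Prop :=
  exists vis arcs, dfs_state D r vis [::] arcs /\
    forall u v, T u v = ((u, v) \in arcs).

Definition tree_depth (V : finType) (T : rel V) (r u : V) (i : nat) : Prop :=
  exists p : seq V, [/\ path T r p, last r p = u & size p = i].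

Definition tree_length (V : finType) (T : rel V) (t : nat) : Prop :=
  (exists x p, path T x p /\ uniq (x :: p) /\ size p = t) /\
  (forall x p, path T x p -> uniq (x :: p) -> size p <= t).

Definition level (V : finType) (T : rel V) (r : V) (i : nat) (u : V) : Prop :=
  tree_depth T r u i.

(* Main.v *)
Require Import Defs.
From mathcomp Require Import all_boot.
Set Implicit Arguments. Unset Strict Implicit.

Definition arel (V : eqType) (arcs : seq (V * V)) : rel V :=
  fun a b => (a, b) \in arcs.

Definition anc (V : eqType) (arcs : seq (V * V)) (y x : V) : Prop :=
  exists p, [/\ path (arel arcs) y p, last y p = x & p != [::]].

Lemma arel_sub (V : eqType) (arcs : seq (V * V)) e :
  subrel (arel arcs) (arel (e :: arcs)).
Proof. by move=> a b; rewrite /arel in_cons => ->; rewrite orbT. Qed.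

Lemma anc_sub (V : eqType) (arcs : seq (V * V)) e y x :
  anc arcs y x -> anc (e :: arcs) y x.
Proof.
by case=> p [Hp Hl Hn]; exists p; split=> //; apply: sub_path (arel_sub e) _ _ Hp.
Qed.

Lemma anc_arc (V : eqType) (arcs : seq (V * V)) a b :
  (a, b) \in arcs -> anc arcs a b.
Proof. by move=> H; exists [:: b]; split=> //=; rewrite andbT. Qed.

Lemma anc_trans (V : eqType) (arcs : seq (V * V)) x y z :
  anc arcs x y -> anc arcs y z -> anc arcs x z.
Proof.
case=> p [Hp Hl Hn] [q [Hq Hl' Hn']]; exists (p ++ q); split.
- by rewrite cat_path Hp Hl.
- by rewrite last_cat Hl.
- by case: p Hn {Hp Hl}.
Qed.

Lemma stack_anc (V : eqType) (arcs : seq (V * V)) x s y :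
  path (fun a b => (b, a) \in arcs) x s -> y \in s -> anc arcs y x.
Proof.
elim: s x => [//|z s IH] x /= /andP [Hzx Hp]; rewrite in_cons => /orP [/eqP ->|Hy].
  exact: anc_arc.
apply: anc_trans (IH _ Hp Hy) (anc_arc Hzx).
Qed.

Lemma anc_src (V : eqType) (arcs : seq (V * V)) y x :
  anc arcs y x -> exists b, (y, b) \in arcs.
Proof. by case=> [[|b p]] [] //= /andP [H _] _ _; exists b. Qed.

Record Inv (V : finType) (D : rel V) (r : V) (vis st : seq V)
    (arcs : seq (V * V)) (fin : seq V) : Prop := {
  i1 : uniq vis;
  i2 : uniq (st ++ fin);
  i3 : vis =i st ++ fin;
  i4 : r \in vis;
  i5 : forall a b, (a, b) \in arcs ->
         [/\ D a b, a \in vis, b \in vis & index b vis < index a vis];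
  i6 : forall a b c, (a, b) \in arcs -> (c, b) \in arcs -> a = c;
  i7 : forall a, (a, r) \notin arcs;
  i8 : forall x, x \in vis -> exists p, path (arel arcs) r p /\ last r p = x;
  i9 : path (fun a b => (b, a) \in arcs) (head r st) (behead st);
  i10 : forall x y, x \in fin -> D x y ->
          (y \in fin /\ index x fin < index y fin) \/ anc arcs y x
}.

Lemma dfs_inv (V : finType) (D : rel V) (r : V) :
  irreflexive D -> forall vis st arcs, dfs_state D r vis st arcs ->
  exists fin, Inv D r vis st arcs fin.
Proof.
move=> irrD vis st arcs; elim => [|vis0 st0 arcs0 u v _ [fin I] Duv vnot
  | vis0 st0 arcs0 u _ [fin I] Hall].
- exists [::]; split=> //=; try (by rewrite mem_seq1);
    try (by move=> x; rewrite cats0).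
  by move=> x; rewrite mem_seq1 => /eqP ->; exists [::].
- have uvis : u \in vis0 by rewrite (i3 I) in_cons eqxx.
  have vu : (v == u) = false by apply/negbTE; apply: contraNneq vnot => ->.
  exists fin; split.
  + by rewrite /= vnot (i1 I).
  + rewrite cat_cons cons_uniq (i2 I) andbT.
    by rewrite -(i3 I).
  + by move=> x; rewrite !in_cons (i3 I) in_cons.
  + by rewrite in_cons (i4 I) orbT.
  + move=> a b; rewrite in_cons => /orP [/eqP [Ha Hb]|Hab].
      subst a b.
      split=> //; first by rewrite in_cons uvis orbT.
        by rewrite in_cons eqxx.
      by rewrite /= eqxx vu.
    have [Dab ain bin lt] := i5 I Hab.
    have av : (v == a) = false by apply/negbTE; apply: contraNneq vnot => ->.
    have bv : (v == b) = false by apply/negbTE; apply: contraNneq vnot => ->.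
    by split=> //; rewrite ?in_cons ?ain ?bin ?orbT //= av bv.
  + move=> a b c; rewrite !in_cons.
    case/orP => [/eqP [Ha Hb]|Hab]; case/orP => [/eqP [Hc Hb']|Hcb].
    * by rewrite Ha Hc.
    * by subst b; have [_ _ bin _] := i5 I Hcb; rewrite bin in vnot.
    * by subst b; have [_ _ bin _] := i5 I Hab; rewrite bin in vnot.
    * have := @i6 _ _ _ _ _ _ _ I a b c. by apply; [exact: Hab|exact: Hcb].
  + move=> a; rewrite in_cons negb_or (i7 I) andbT.
    by apply/eqP => -[_ Hr]; rewrite -Hr (i4 I) in vnot.
  + move=> x; rewrite in_cons => /orP [/eqP ->|Hx].
      have [p [Hp Hl]] := i8 I uvis.
      exists (rcons p v); rewrite last_rcons rcons_path Hl; split=> //.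
      rewrite (sub_path (@arel_sub _ _ _) Hp) /=.
      by rewrite /arel in_cons eqxx.
    have [p [Hp Hl]] := i8 I Hx.
    by exists p; split=> //; apply: sub_path (@arel_sub _ _ _) _ _ Hp.
  + have := i9 I; rewrite /= in_cons eqxx /=.
    by apply: sub_path => a b H; rewrite in_cons H orbT.
  + move=> x y Hx Dxy; case: (i10 I Hx Dxy) => [H|H]; [left|right] => //.
    exact: anc_sub.
- have ufin : u \notin fin.
    by have := i2 I; rewrite cat_cons cons_uniq mem_cat negb_or => /andP [/andP [_ ->]].
  exists (u :: fin); split.
  + exact: (i1 I).
  + by rewrite -(cat1s u fin) uniq_catCA cat1s -cat_cons (i2 I).
  + move=> x; rewrite (i3 I) !mem_cat !in_cons.
    by case: (x == u); case: (x \in st0); case: (x \in fin).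
  + exact: (i4 I).
  + exact: (i5 I).
  + exact: (i6 I).
  + exact: (i7 I).
  + exact: (i8 I).
  + by have := i9 I; case: (st0) => [|z s] //= /andP [].
  + move=> x y; rewrite in_cons => /orP [/eqP ->|Hx] Dxy.
    * have := Hall _ Dxy; rewrite (i3 I) in_cons mem_cat => /orP [/eqP Hyu|/orP [Hy|Hy]].
      -- by rewrite Hyu irrD in Dxy.
      -- right; exact: stack_anc (i9 I) Hy.
      -- left; rewrite in_cons Hy orbT; split=> //=; rewrite eqxx.
         case: eqP => // Hu; by rewrite Hu Hy in ufin.
    * case: (i10 I Hx Dxy) => [[Hy lt]|H]; [left|right] => //.
      have xu : (u == x) = false by apply/negbTE; apply: contraNneq ufin => ->.
      have yu : (u == y) = false by apply/negbTE; apply: contraNneq ufin => ->.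
      by rewrite in_cons Hy orbT /= xu yu.
Qed.

Lemma all_vis (V : finType) (D : rel V) (r : V) vis arcs fin :
  Inv D r vis [::] arcs fin -> strongly_connected D -> forall u, u \in vis.
Proof.
move=> I sc u; have /connectP [p Hp ->] := sc r u.
suff H : forall x p, path D x p -> x \in vis -> last x p \in vis.
  exact: H Hp (i4 I).
move=> {Hp u p} x0 p0.
elim: p0 x0 => [//|y p IH] x /= /andP [Dxy Hp] Hx; apply: IH Hp _.
have xf : x \in fin by rewrite -[_ \in fin]/(x \in [::] ++ fin) -(i3 I).
case: (i10 I xf Dxy) => [[Hy _]|Ha]; first by rewrite (i3 I).
by have [b /(i5 I) []] := anc_src Ha.
Qed.

Lemma tree_uniq (V : finType) (D : rel V) (r : V) vis st arcs fin x p :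
  Inv D r vis st arcs fin -> path (arel arcs) x p -> uniq (x :: p).
Proof.
move=> I Hp.
apply: (@sorted_uniq _ (fun a b => index b vis < index a vis)).
- by move=> b a c H1 H2; exact: ltn_trans H2 H1.
- by move=> a; rewrite ltnn.
rewrite /=; by apply: sub_path _ _ _ Hp => a b /(i5 I) [].
Qed.

Lemma depth_uniq (V : finType) (D : rel V) (r : V) vis st arcs fin p q :
  Inv D r vis st arcs fin -> path (arel arcs) r p -> path (arel arcs) r q ->
  last r p = last r q -> p = q.
Proof.
move=> I; elim/last_ind: p q => [|p a IH] q.
  case/lastP: q => [//|q b] _; rewrite rcons_path last_rcons /= => /andP [_ H] Hb.
  rewrite /= in Hb; rewrite /arel -Hb in H.
  by move: (i7 I (last r q)); rewrite H.
case/lastP: q => [|q b]; rewrite !rcons_path !last_rcons.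
  move=> /andP [_ H] _ /= Ha.
  rewrite /arel Ha in H.
  by move: (i7 I (last r p)); rewrite H.
move=> /andP [Hp Ha] /andP [Hq Hb] Hab; subst b.
by rewrite (IH q Hp Hq (i6 I Ha Hb)).
Qed.

Theorem mainTheorem12 (V : finType) (D : rel V) (k : nat) (r : V) (T : rel V)
    (t : nat) :
  2 <= k ->
  irreflexive D ->
  strongly_connected D ->
  (forall c : seq V, dicycle D c -> size c %% k != 1) ->
  dfs_tree D r T ->
  tree_length T t ->
  let U := fun (s : nat) (u : V) =>
    exists i, [/\ i <= t, i %% k = s & level T r i u] in
  (forall u : V, exists! s, s < k /\ U s u) /\
  (forall s, s < k -> acyclic_set D (U s)).
Proof.
move=> k2 irrD sc Hcyc [vis [arcs [Hst HT]]] [_ Htl] U.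
have [fin I] := dfs_inv irrD Hst.
have eT : T =2 arel arcs by move=> a b; rewrite HT.
have allv := all_vis I sc.
have allf : forall u, u \in fin.
  by move=> u; rewrite -[_ \in fin]/(u \in [::] ++ fin) -(i3 I).
have depth : forall u, exists p, path (arel arcs) r p /\ last r p = u.
  by move=> u; apply: (i8 I); apply: allv.
have lvl : forall i u, level T r i u <->
    exists p, [/\ path (arel arcs) r p, last r p = u & size p = i].
  by move=> i u; split; case=> p [Hp Hl Hs]; exists p; split=> //;
    move: Hp; rewrite (eq_path eT).
have lvl_uniq : forall i j u, level T r i u -> level T r j u -> i = j.
  move=> i j u /lvl [p [Hp Hl <-]] /lvl [q [Hq Hl' <-]].
  by rewrite (depth_uniq I Hp Hq); last by rewrite Hl Hl'.
have lvl_le : forall i u, level T r i u -> i <= t.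
  move=> i u /lvl [p [Hp _ <-]]; apply: (Htl r p); first by rewrite (eq_path eT).
  exact: tree_uniq I Hp.
have k0 : 0 < k by apply: leq_trans k2.
split.
  move=> u; have [p [Hp Hl]] := depth u.
  have Lu : level T r (size p) u by apply/lvl; exists p.
  exists (size p %% k); split.
    split; first by rewrite ltn_pmod.
    by exists (size p); split=> //; exact: lvl_le Lu.
  move=> s' [_ [i [_ Hi Hlv]]]; rewrite -Hi.
  by rewrite (lvl_uniq _ _ _ Lu Hlv).
move=> s _ c /andP [cn /andP [cu cc]] Hall.
have claim : forall x y, U s x -> U s y -> D x y -> index x fin < index y fin.
  move=> x y [i [_ Hi Lx]] [j [_ Hj Ly]] Dxy.
  case: (i10 I (allf x) Dxy) => [[_ //]|[p [Hp Hl Hn]]].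
  exfalso.
  have [py [Hpy Hly Hsy]] := (lvl _ _).1 Ly.
  have Lx' : level T r (j + size p) x.
    apply/lvl; exists (py ++ p); split.
    - by rewrite cat_path Hpy Hly.
    - by rewrite last_cat Hly.
    - by rewrite size_cat Hsy.
  have eij := lvl_uniq _ _ _ Lx Lx'.
  have Hm : size p %% k = 0.
    have := eqn_modDl j (size p) 0 k; rewrite addn0 -eij Hi Hj eqxx.
    by move/esym/eqP; rewrite mod0n.
  have Hd : dicycle D (y :: p).
    rewrite /dicycle (tree_uniq I Hp) /= rcons_path Hl Dxy andbT.
    by apply: sub_path _ _ _ Hp => a b /(i5 I) [].
  move: (Hcyc _ Hd).
  by rewrite /= -addn1 -modnDml Hm add0n modn_small.
case: c cn cu cc Hall => [//|x p] _ _ cc Hall.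
have Hlt : path (fun a b => index a fin < index b fin) x (rcons p x).
  apply: (@sub_in_path _ (mem (x :: p)) D) cc.
    by move=> a b Ha Hb Dab; apply: claim (Hall a Ha) (Hall b Hb) Dab.
  apply/allP => z; rewrite in_cons mem_rcons => /orP [/eqP ->|H].
    exact: mem_head.
  exact: H.
have tr : transitive (fun a b : V => index a fin < index b fin).
  by move=> b a c H1 H2; exact: ltn_trans H1 H2.
have /allP := order_path_min tr Hlt.
by move=> /(_ x); rewrite mem_rcons mem_head ltnn => /(_ isT).
Qed.
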